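(* Let $R$ be a semisimple ring, with notation as in the context (so $J(R)=0$ and $\overline R=R$). Let $h_1\colon R^m\to R^n$ and $h_2\colon R^n\to R^\ell$ be column-adapted $R$-linear maps. Then $h_2\circ h_1\colon R^m\to R^\ell$ is column-adapted.
   Context: Let $R$ be an Artinian ring, $J(R)$ its Jacobson radical, $\overline R=R/J(R)$, and $\bar x$ (resp. $\bar A$) the image of an element (resp. entrywise image of a matrix). $\overline R$ is semisimple, $\overline R\cong \mathrm{Mat}_{\mu_1}(\mathbb D_1)\times\cdots\times\mathrm{Mat}_{\mu_q}(\mathbb D_q)$ with division rings $\mathbb D_k$; put $\mu=\mu_1+\cdots+\mu_q$. Fix orthogonal idempotents $e^k_i\in R$ ($1\le k\le q$, $1\le i\le\mu_k$) with $\sum_{k,i}e^k_i=1$ lifting the orthogonal idempotents $\bar e^k_i$ of $\overline R$ given by the diagonal matrix units of this decomposition (so $\bar e^k_i\overline R\cong\mathbb D_k^{\mu_k}$ and $e^k_iR\cong e^{k'}_{i'}R$ iff $k=k'$). Let $\mathbb L_{hk}=e^h_1Re^k_1$; then $\overline{\mathbb L_{kk}}=\mathbb D_k$ and $\overline{\mathbb L_{hk}}=0$ for $h\ne k$. The Peirce decomposition $R\cong\mathrm{End}(R_R)=\bigoplus\mathrm{Hom}(e^k_jR,e^h_iR)$, together with the isomorphisms $e^h_iR\cong e^h_1R$, gives an injective ring homomorphism (the Artin–Wedderburn embedding) $\Phi\colon R\to\mathrm{Mat}_\mu(R)$, $x\mapsto(\Phi_{hk}(x))_{h,k=1}^q$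 a $q\times q$ block matrix with $\Phi_{hk}(x)\in\mathrm{Mat}_{\mu_h,\mu_k}(\mathbb L_{hk})$; its reduction $\overline\Phi\colon\overline R\to\mathrm{Mat}_\mu(\overline R)$ sends $\bar x$ to the block-diagonal matrix whose $k$-th block is the $\mathrm{Mat}_{\mu_k}(\mathbb D_k)$-component of $\bar x$. Vectors $R^n$ are columns (right $R$-modules); an $R$-linear $h\colon R^m\to R^n$ is an $n\times m$ matrix, and $\Phi(h)\in\mathrm{Mat}_{\mu n,\mu m}(R)$ is obtained by replacing each entry $x$ by $\Phi(x)$; similarly $\overline\Phi(\bar h)$. Distinguished basis: for $1\le k\le q$, $1\le a\le m$, $1\le r\le\mu_k$, let $\vec v(k)_{(a-1)\mu_k+r}$ be the standard basis vector of $R^{\mu m}$ of index $(a-1)\mu+\mu_1+\cdots+\mu_{k-1}+r$; define $\vec w(k)_i$ ($1\le i\le\mu_kn$) in $R^{\mu n}$ in the same way, and use bars for images in $\overline R^{\mu m},\overline R^{\mu n}$. Then $\overline\Phi(\bar h)(\overline{\vec v(k)_j})\in\bigoplus_{i=1}^{\mu_kn}\overline{\vec w(k)_i}\cdot\mathbb D_k$. For surjective $h$ and each $k$, $\mathfrak S(h,k)$ is the smallest, in the lexicographic order on increasingly sorted sequences, subset $S\subset\{1,\dots,\mu_km\}$ such that $\{\overline\Phi(\bar h)(\overline{\vec v(k)_j}):j\in S\}$ is a basis of the right $\mathbb D_k$-module $\bigoplus_{i=1}^{\mu_kn}\overline{\vec w(k)_i}\cdot\mathbb D_k$ (it has $\mu_kn$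 elements). A surjective $R$-linear $h\colon R^m\to R^n$ is column-adapted if for every $k$, writing $\mathfrak S(h,k)=\{j_1<\cdots<j_{\mu_kn}\}$, one has $\Phi(h)(\vec v(k)_{j_i})=\vec w(k)_i$ for all $1\le i\le\mu_kn$ (and hence also $\overline\Phi(\bar h)(\overline{\vec v(k)_{j_i}})=\overline{\vec w(k)_i}$). *)

(* Defs.v *)
From HB Require Import structures.
From mathcomp Require Import all_boot all_order all_algebra.
Set Implicit Arguments. Unset Strict Implicit. Unset Printing Implicit Defensive.
Import GRing.Theory.
Local Open Scope ring_scope.

(* Conventions: all indices are 0-based.  Blocks k < q, positions i < mu k.
   e k i  = the idempotent e^k_{i+1};  e k 0 = e^k_1.
   a k i  in e k 0 R e k i and b k i in e k i R e k 0 are mutually inverse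
   (a k i * b k i = e k 0, b k i * a k i = e k i): left multiplication by
   a k i is the chosen isomorphism e^k_{i+1} R ~= e^k_1 R (identity for i=0). *)

Section AW.
Variable R : nzRingType.
Variables (q : nat) (mu : nat -> nat) (e a b : nat -> nat -> R).

Definition inL (h k : nat) (x : R) : Prop := e h 0 * x * e k 0 = x.

Definition AW_data : Prop :=
  [/\ (forall k, (k < q)%N -> (0 < mu k)%N) /\
      (forall k i k' i', (k < q)%N -> (i < mu k)%N -> (k' < q)%N -> (i' < mu k')%N ->
          e k i * e k' i' = if (k == k') && (i == i') then e k i else 0),
      \sum_(k < q) \sum_(i < mu k) e k i = 1,
      (forall k i, (k < q)%N -> (i < mu k)%N ->
          [/\ e k 0 * a k i * e k i = a k i, e k i * b k i * e k 0 = b k i,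
              a k i * b k i = e k 0 & b k i * a k i = e k i]),
      (forall k, (k < q)%N -> a k 0 = e k 0 /\ b k 0 = e k 0) &
   (
      (forall h k x, (h < q)%N -> (k < q)%N -> h != k -> e h 0 * x * e k 0 = 0) /\
      (forall k, (k < q)%N -> e k 0 != 0 /\
          forall x, inL k k x -> x != 0 ->
            exists y, [/\ inL k k y, x * y = e k 0 & y * x = e k 0]))].

Definition off (k : nat) : nat := (\sum_(j < k) mu j)%N.
Definition muT : nat := off q.

(* decoding an index P < mu into (block, position) *)
Definition blk (P : nat) : nat := (\sum_(k < q) (off k.+1 <= P : nat))%N.
Definition pos (P : nat) : nat := (P - off (blk P))%N.

(* entry (P,Q) of the Artin--Wedderburn embedding Phi(x) *)
Definition PhiE (x : R) (P Q : nat) : R :=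
  a (blk P) (pos P) * x * b (blk Q) (pos Q).

Definition Phi (x : R) : 'M[R]_muT := \matrix_(P, Q) PhiE x P Q.

(* entry of a matrix addressed by natural numbers (0 outside range) *)
Definition mxe (n m : nat) (A : 'M[R]_(n, m)) (i j : nat) : R :=
  match insub i, insub j with Some i', Some j' => A i' j' | _, _ => 0 end.

(* Phi(h) : replace every entry of h by its image under Phi *)
Definition PhiM (n m : nat) (h : 'M[R]_(n, m)) : 'M[R]_(muT * n, muT * m) :=
  \matrix_(I, J) PhiE (mxe h (I %/ muT) (J %/ muT)) (I %% muT) (J %% muT).

(* index of the distinguished basis vector v(k)_{j+1} (resp. w(k)_{j+1}) *)
Definition vidx (k j : nat) : nat := ((j %/ mu k) * muT + off k + j %% mu k)%N.

Definition stdv (N : nat) (idx : nat) (c : R) : 'cV[R]_N :=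
  \col_I (if val I == idx then c else 0).

Definition vvec (m k j : nat) : 'cV[R]_(muT * m) := stdv _ (vidx k j) 1.
(* w(k)_{i+1} in R^{mu n}, the unit of D_k = L_kk at its position *)
Definition wvec (n k i : nat) : 'cV[R]_(muT * n) := stdv _ (vidx k i) (e k 0).

(* membership in the right D_k-module (+)_i w(k)_i . D_k *)
Definition inMk (N k : nat) (c : 'cV[R]_(muT * N)) : Prop :=
  forall I : 'I_(muT * N),
    if (off k <= I %% muT < off k + mu k)%N then inL k k (c I 0) else c I 0 = 0.

Definition rscal (N : nat) (c : 'cV[R]_N) (d : R) : 'cV[R]_N := \col_I (c I 0 * d).

Definition is_basis_k (n m : nat) (h : 'M[R]_(n, m)) (k : nat)
    (S : {set 'I_(mu k * m)}) : Prop :=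
  let c (j : 'I_(mu k * m)) := PhiM h *m vvec m k j in
  [/\ (forall j, j \in S -> inMk k (c j)),
      {in S &, injective c},
      (forall y, inMk k y -> exists d : 'I_(mu k * m) -> R,
          (forall j, inL k k (d j)) /\ y = \sum_(j in S) rscal (c j) (d j)) &
      (forall d : 'I_(mu k * m) -> R, (forall j, inL k k (d j)) ->
          \sum_(j in S) rscal (c j) (d j) = 0 -> forall j, j \in S -> d j = 0)].

Fixpoint lexle (s t : seq nat) : bool :=
  match s, t with
  | [::], _ => true
  | _ :: _, [::] => false
  | x :: s', y :: t' => (x < y)%N || ((x == y) && lexle s' t')
  end.

Definition sortedS (N : nat) (S : {set 'I_N}) : seq nat :=
  sort leq [seq val j | j <- enum S].

Definition is_frakS (n m : nat) (h : 'M[R]_(n, m)) (k : nat)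
    (S : {set 'I_(mu k * m)}) : Prop :=
  is_basis_k h S /\
  forall S' : {set 'I_(mu k * m)}, is_basis_k h S' -> lexle (sortedS S) (sortedS S').

Definition surj_mx (n m : nat) (h : 'M[R]_(n, m)) : Prop :=
  forall y : 'cV[R]_n, exists x : 'cV[R]_m, h *m x = y.

Definition column_adapted (n m : nat) (h : 'M[R]_(n, m)) : Prop :=
  surj_mx h /\
  forall k, (k < q)%N -> forall S : {set 'I_(mu k * m)}, is_frakS h S ->
    forall i, (i < mu k * n)%N ->
      PhiM h *m vvec m k (nth 0%N (sortedS S) i) = wvec n k i.

End AW.

(* Main.v *)
Require Import Defs.
From Stdlib Require Import ClassicalEpsilon.
From HB Require Import structures.
From mathcomp Require Import all_boot all_order all_algebra zify.
Set Implicit Arguments. Unset Strict Implicit. Unset Printing Implicit Defensive.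
Import GRing.Theory.

Section Comb.
Variables (q : nat) (mu : nat -> nat).
Local Notation off := (off mu).
Local Notation muT := (muT q mu).
Local Notation blk := (blk q mu).
Local Notation pos := (pos q mu).
Local Notation vidx := (vidx q mu).
Hypothesis Hmu : forall k, k < q -> 0 < mu k.

Lemma offS k : off k.+1 = off k + mu k.
Proof. by rewrite /Defs.off big_ord_recr. Qed.

Lemma off_mono i j : i <= j -> off i <= off j.
Proof.
move=> /subnK <-; elim: (j - i) => [|d IH] //=.
by rewrite addSn offS; apply: leq_trans IH (leq_addr _ _).
Qed.

Lemma sum_ltmin k0 n : (\sum_(k < n) (k < k0 : nat) = minn k0 n)%N.
Proof.
elim: n => [|n IH]; first by rewrite big_ord0; lia.
rewrite big_ord_recr /= IH; case: (ltnP n k0) => H; lia.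
Qed.

Lemma blk_off k0 i : k0 < q -> i < mu k0 -> blk (off k0 + i) = k0.
Proof.
move=> hk hi; rewrite /Defs.blk.
rewrite (eq_bigr (fun k : 'I_q => (k < k0 : nat))) ?sum_ltmin; first lia.
move=> k _; suff -> : (off k.+1 <= off k0 + i) = (k < k0) by [].
case: (ltnP k k0) => H.
- by rewrite (leq_trans (off_mono H)) ?leq_addr.
- apply/negbTE; rewrite -ltnNge.
  have H2 : k0.+1 <= k.+1 by [].
  have: off k0 + i < off k0 + mu k0 by rewrite ltn_add2l.
  by move=> H3; apply: leq_trans H3 _; rewrite -offS; apply: off_mono.
Qed.

Lemma pos_off k0 i : k0 < q -> i < mu k0 -> pos (off k0 + i) = i.
Proof. by move=> hk hi; rewrite /Defs.pos blk_off // addKn. Qed.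

Lemma decomp P : P < muT -> exists k0 i, [/\ k0 < q, i < mu k0 & P = off k0 + i].
Proof.
rewrite /Defs.muT; elim: q => [|n IH]; first by rewrite /Defs.off big_ord0.
rewrite offS => hP; case: (ltnP P (off n)) => H.
- by have [k0 [i [h1 h2 h3]]] := IH H; exists k0, i; split => //; apply: ltnW.
- exists n, (P - off n); split => //; lia.
Qed.

Lemma blkP P : P < muT -> [/\ blk P < q, pos P < mu (blk P) & off (blk P) + pos P = P].
Proof.
move=> /decomp [k0 [i [h1 h2 ->]]]; rewrite pos_off // blk_off //.
Qed.

Lemma offq k : k < q -> off k + mu k <= muT.
Proof. by move=> hk; rewrite -offS; apply: off_mono. Qed.

Lemma inblk P k : P < muT -> k < q -> (off k <= P < off k + mu k) = (blk P == k).
Proof.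
move=> hP hk; have [h1 h2 h3] := blkP hP.
apply/idP/eqP.
- move=> /andP [H1 H2]; rewrite -(subnKC H1) blk_off //; lia.
- move=> E; rewrite -h3 E; rewrite E in h2; lia.
Qed.

Lemma vidx_mod k j : k < q -> vidx k j %% muT = off k + j %% mu k.
Proof.
move=> hk; rewrite /Defs.vidx -addnA modnMDl modn_small //.
have := offq hk; have : j %% mu k < mu k by rewrite ltn_mod Hmu.
lia.
Qed.

Lemma vidx_div k j : k < q -> vidx k j %/ muT = j %/ mu k.
Proof.
move=> hk; rewrite /Defs.vidx -addnA divnMDl; last first.
  by have := offq hk; have := Hmu hk; lia.
rewrite [X in _ + X]divn_small ?addn0 //.
have := offq hk; have : j %% mu k < mu k by rewrite ltn_mod Hmu.
lia.
Qed.

Lemma vidx_lt k j N : k < q -> j < mu k * N -> vidx k j < muT * N.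
Proof.
move=> hk hj; have hT : 0 < muT by have := offq hk; have := Hmu hk; lia.
rewrite (divn_eq (vidx k j) muT) vidx_mod // vidx_div //.
have h1 : j %/ mu k < N by rewrite ltn_divLR ?Hmu // mulnC.
have h2 : off k + j %% mu k < muT.
  have := offq hk; have : j %% mu k < mu k by rewrite ltn_mod Hmu.
  lia.
rewrite (mulnC muT N).
have : j %/ mu k * muT + muT <= N * muT by rewrite -mulSnr leq_mul2r h1 orbT.
lia.
Qed.

Lemma vidx_inj k j1 j2 : k < q -> vidx k j1 = vidx k j2 -> j1 = j2.
Proof.
move=> hk E.
have E1 := vidx_div j1 hk; have E2 := vidx_div j2 hk.
have F1 := vidx_mod j1 hk; have F2 := vidx_mod j2 hk.
rewrite E in E1 F1; rewrite (divn_eq j1 (mu k)) (divn_eq j2 (mu k)).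
rewrite -E1 E2; congr (_ + _); lia.
Qed.

Lemma vidx_blk k j : k < q -> blk (vidx k j %% muT) = k.
Proof.
by move=> hk; rewrite vidx_mod // blk_off // ltn_mod Hmu.
Qed.

Lemma vidx_pos k j : k < q -> pos (vidx k j %% muT) = j %% mu k.
Proof.
by move=> hk; rewrite vidx_mod // pos_off // ltn_mod Hmu.
Qed.

Lemma vidx_surj k I N : k < q -> I < muT * N -> blk (I %% muT) = k ->
  exists2 j, j < mu k * N & vidx k j = I.
Proof.
move=> hk hI hb.
have hT : 0 < muT by have := offq hk; have := Hmu hk; lia.
have [h1 h2 h3] := blkP (ltn_pmod I hT).
rewrite hb in h1 h2 h3.
exists ((I %/ muT) * mu k + pos (I %% muT)).
- have : I %/ muT < N by rewrite ltn_divLR // mulnC.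
  move=> H; apply: (@leq_trans ((I %/ muT).+1 * mu k)).
    by rewrite mulSn addnC ltn_add2r.
  by rewrite mulnC leq_mul2l H orbT.
- have d1 : (I %/ muT * mu k + pos (I %% muT)) %/ mu k = I %/ muT.
    by rewrite divnMDl ?Hmu // (divn_small h2) addn0.
  have d2 : (I %/ muT * mu k + pos (I %% muT)) %% mu k = pos (I %% muT).
    by rewrite modnMDl modn_small.
  by rewrite /Defs.vidx d1 d2 -addnA h3 -divn_eq.
Qed.

Lemma sum_muT (V : nmodType) (F : nat -> V) :
  (\sum_(P < muT) F P = \sum_(k < q) \sum_(i < mu k) F (off k + i)%N)%R.
Proof.
rewrite /Defs.muT; elim: q => [|n IH]; first by rewrite /Defs.off !big_ord0.
rewrite big_ord_recr /= -IH offS -!(big_mkord xpredT) (big_cat_nat _ (leq_addr _ _)) //=.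
congr (_ + _)%R.
rewrite -{1}[off n]add0n big_addn addKn big_mkord.
by apply: eq_bigr => i _; rewrite addnC.
Qed.

Lemma sum_mul (V : nmodType) p N (F : nat -> V) :
  (\sum_(K < p * N) F K = \sum_(r < N) \sum_(P < p) F (r * p + P)%N)%R.
Proof.
elim: N => [|N IH]; first by rewrite muln0 !big_ord0.
rewrite big_ord_recr /= -IH mulnS addnC -!(big_mkord xpredT).
rewrite (big_cat_nat _ (leq_addr _ _)) //=; congr (_ + _)%R.
rewrite -{1}[p * N]add0n big_addn addKn big_mkord.
by apply: eq_bigr => i _; rewrite addnC mulnC.
Qed.

End Comb.

Lemma lexle_refl s : lexle s s.
Proof. by elim: s => //= x s ->; rewrite eqxx ltnn. Qed.

Lemma lexle_anti s t : lexle s t -> lexle t s -> s = t.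
Proof.
elim: s t => [|x s IH] [|y t] //=.
case: (ltngtP x y) => //= [->] /= H1 H2; by rewrite (IH t H1 H2).
Qed.

Lemma notin_path a s : path ltn a s -> a \notin s.
Proof.
move=> hs; have ma : all (ltn a) s by apply: order_path_min hs; exact: ltn_trans.
by apply/negP => /(allP ma) /=; rewrite ltnn.
Qed.

Lemma lex_lemma s t x : sorted ltn s -> sorted ltn t ->
  (forall y, y < x -> (y \in s) = (y \in t)) -> x \in s -> x \notin t ->
  has (fun y => x < y) t -> lexle s t.
Proof.
elim: s t => [|a s IH] [|b t] //= hs ht hst hx hxt hh.
have ma : all (ltn a) s by apply: order_path_min hs; exact: ltn_trans.
have mb : all (ltn b) t by apply: order_path_min ht; exact: ltn_trans.
have hxa : a <= x.
  move: hx; rewrite inE => /orP [/eqP -> //|]; by move/(allP ma)/ltnW.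
case: (ltngtP a b) => //= [hab|hab].
- exfalso; case: (ltngtP b x) => [hbx|hbx|hbx].
  + have := hst b hbx; rewrite !inE eqxx /= => /orP [/eqP E|].
      by move: hab; rewrite E ltnn.
    by move/(allP ma) => H; have := ltn_trans H hab; rewrite ltnn.
  + by have := ltn_trans hbx hab; rewrite ltnNge hxa.
  + by move: hxt; rewrite -hbx inE eqxx.
- subst b; apply: IH; first exact: path_sorted hs.
  + exact: path_sorted ht.
  + move=> y hy; have := hst y hy; rewrite !inE.
    case: (eqVneq y a) => [-> _|_ //].
    by rewrite (negbTE (notin_path hs)) (negbTE (notin_path ht)).
  + have xa : x != a by apply/eqP => E; move: hxt; rewrite E inE eqxx.
    by move: hx; rewrite inE (negbTE xa).
  + by move: hxt; rewrite inE negb_or => /andP [].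
  + case/orP: hh => [hxa'|//]; by rewrite ltnNge hxa in hxa'.
Qed.

Lemma sortedS_sorted N (S : {set 'I_N}) : sorted ltn (sortedS S).
Proof.
rewrite ltn_sorted_uniq_leq sort_uniq map_inj_uniq ?enum_uniq /=; last exact: val_inj.
exact: (sort_sorted leq_total).
Qed.

Lemma mem_sortedS N (S : {set 'I_N}) (j : 'I_N) : (val j \in sortedS S) = (j \in S).
Proof. by rewrite /sortedS mem_sort mem_map ?mem_enum //; exact: val_inj. Qed.

Lemma sortedS_lt N (S : {set 'I_N}) x : x \in sortedS S -> x < N.
Proof. rewrite /sortedS mem_sort; case/mapP => j _ ->; exact: ltn_ord. Qed.

Lemma sortedS_inj N (S1 S2 : {set 'I_N}) : sortedS S1 = sortedS S2 -> S1 = S2.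
Proof. by move=> E; apply/setP => j; rewrite -!mem_sortedS E. Qed.

Lemma size_sortedS N (S : {set 'I_N}) : size (sortedS S) = #|S|.
Proof. by rewrite /sortedS size_sort size_map cardE. Qed.

Local Open Scope ring_scope.

Definition pb (P : Prop) : bool := if excluded_middle_informative P then true else false.
Lemma pbP (P : Prop) : reflect P (pb P).
Proof. by rewrite /pb; case: excluded_middle_informative => h; constructor. Qed.

Section Ring.
Variable R : nzRingType.
Variables (q : nat) (mu : nat -> nat) (e a b : nat -> nat -> R).
Hypothesis Hmu : forall k, (k < q)%N -> (0 < mu k)%N.
Hypothesis Horth : forall k i k' i', (k < q)%N -> (i < mu k)%N -> (k' < q)%N -> (i' < mu k')%N ->
          e k i * e k' i' = if (k == k') && (i == i') then e k i else 0.
Hypothesis Hsum : \sum_(k < q) \sum_(i < mu k) e k i = 1.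
Hypothesis Hab : forall k i, (k < q)%N -> (i < mu k)%N ->
          [/\ e k 0 * a k i * e k i = a k i, e k i * b k i * e k 0 = b k i,
              a k i * b k i = e k 0 & b k i * a k i = e k i].
Hypothesis Ha0 : forall k, (k < q)%N -> a k 0 = e k 0 /\ b k 0 = e k 0.
Hypothesis HL : forall h k x, (h < q)%N -> (k < q)%N -> h != k -> e h 0 * x * e k 0 = 0.
Hypothesis Hdiv : forall k, (k < q)%N -> e k 0 != 0 /\
          forall x, inL e k k x -> x != 0 ->
            exists y, [/\ inL e k k y, x * y = e k 0 & y * x = e k 0].

Local Notation off := (off mu).
Local Notation muT := (muT q mu).
Local Notation blk := (blk q mu).
Local Notation pos := (pos q mu).
Local Notation vidx := (vidx q mu).
Local Notation PhiE := (PhiE q mu a b).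
Local Notation PhiM := (PhiM q mu a b).

Lemma eid k i : (k < q)%N -> (i < mu k)%N -> e k i * e k i = e k i.
Proof. by move=> hk hi; rewrite Horth // !eqxx. Qed.

Lemma ea k i : (k < q)%N -> (i < mu k)%N -> e k 0 * a k i = a k i.
Proof.
move=> hk hi; have [h1 _ _ _] := Hab hk hi.
by rewrite -{1}h1 !mulrA eid ?Hmu // h1.
Qed.

Lemma be k i : (k < q)%N -> (i < mu k)%N -> b k i * e k 0 = b k i.
Proof.
move=> hk hi; have [_ h1 _ _] := Hab hk hi.
by rewrite -{1}h1 -!mulrA eid ?Hmu // !mulrA h1.
Qed.

Lemma ae k i : (k < q)%N -> (i < mu k)%N -> a k i * e k i = a k i.
Proof.
move=> hk hi; have [h1 _ _ _] := Hab hk hi.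
by rewrite -{1}h1 -!mulrA eid // !mulrA h1.
Qed.

Lemma eb k i : (k < q)%N -> (i < mu k)%N -> e k i * b k i = b k i.
Proof.
move=> hk hi; have [_ h1 _ _] := Hab hk hi.
by rewrite -{1}h1 !mulrA eid // h1.
Qed.

Lemma ab_orth h P k p : (h < q)%N -> (P < mu h)%N -> (k < q)%N -> (p < mu k)%N ->
  a h P * b k p = if (h == k) && (P == p) then e k 0 else 0.
Proof.
move=> hh hP hk hp; rewrite -(ae hh hP) -(eb hk hp) mulrA -(mulrA _ (e h P)) Horth //.
case: andP => [[/eqP E1 /eqP E2]|_]; last by rewrite mulr0 mul0r.
by subst; rewrite ae //; have [_ _ -> _] := Hab hk hp.
Qed.

Lemma sumE : \sum_(P < muT) e (blk P) (pos P) = 1.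
Proof.
rewrite (sum_muT q mu (fun P => e (blk P) (pos P))) -Hsum.
apply: eq_bigr => k _; apply: eq_bigr => i _.
by rewrite blk_off // pos_off.
Qed.

Lemma mxe_ord n m (A : 'M[R]_(n, m)) x y (hx : (x < n)%N) (hy : (y < m)%N) :
  mxe A x y = A (Ordinal hx) (Ordinal hy).
Proof.
rewrite /mxe (insubT (fun i => (i < n)%N) hx) (insubT (fun i => (i < m)%N) hy) /=.
by congr (A _ _); apply: val_inj.
Qed.

Lemma muT_pos N (I : 'I_(muT * N)) : (0 < muT)%N.
Proof.
move: (ltn_ord I); move: (nat_of_ord I) => i.
by case: (muT) => [|t] //; rewrite mul0n.
Qed.

Lemma divlt N (I : 'I_(muT * N)) : (I %/ muT < N)%N.
Proof. rewrite ltn_divLR ?(muT_pos I) //; have := ltn_ord I; lia. Qed.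

Lemma modlt N (I : 'I_(muT * N)) : (I %% muT < muT)%N.
Proof. by rewrite ltn_pmod ?(muT_pos I). Qed.

Lemma PhiM_mul n p m (A : 'M[R]_(n, p)) (B : 'M[R]_(p, m)) :
  PhiM (A *m B) = PhiM A *m PhiM B.
Proof.
apply/matrixP => I J; rewrite !mxE.
pose F K := PhiE (mxe A (I %/ muT) (K %/ muT)) (I %% muT) (K %% muT) *
            PhiE (mxe B (K %/ muT) (J %/ muT)) (K %% muT) (J %% muT).
rewrite (eq_bigr (fun K : 'I_(muT * p) => F K)); last by move=> K _; rewrite !mxE.
rewrite (sum_mul muT p F).
have hT := muT_pos I.
have HF : forall r : 'I_p, \sum_(P < muT) F (r * muT + P)%N =
    PhiE (mxe A (I %/ muT) r * mxe B r (J %/ muT)) (I %% muT) (J %% muT).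
  move=> r.
  have HP : forall P : 'I_muT, F (r * muT + P)%N =
     a (blk (I %% muT)) (pos (I %% muT)) * mxe A (I %/ muT) r * e (blk P) (pos P)
       * (mxe B r (J %/ muT) * b (blk (J %% muT)) (pos (J %% muT))).
    move=> P; rewrite /F /Defs.PhiE divnMDl // (divn_small (ltn_ord P)) addn0 modnMDl (modn_small (ltn_ord P)).
    have [h1 h2 h3] := blkP (ltn_ord P).
    have [_ _ _ <-] := Hab h1 h2.
    by rewrite !mulrA.
  rewrite (eq_bigr _ (fun P _ => HP P)) -mulr_suml -mulr_sumr sumE mulr1.
  by rewrite /Defs.PhiE !mulrA.
rewrite (eq_bigr _ (fun r _ => HF r)).
rewrite /Defs.PhiE -mulr_suml -mulr_sumr.
rewrite (mxe_ord _ (divlt I) (divlt J)) mxE.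
congr (_ * _ * _); apply: eq_bigr => r _.
rewrite (mxe_ord _ (divlt I) (ltn_ord r)) (mxe_ord _ (ltn_ord r) (divlt J)).
by congr (A _ _ * B _ _); apply: val_inj.
Qed.

Lemma mul_stdv N M (A : 'M[R]_(N, M)) (j : 'I_M) c :
  A *m stdv M j c = \col_I (A I j * c).
Proof.
apply/matrixP => I z; rewrite !mxE (bigD1 j) //= mxE eqxx big1 ?addr0 //.
by move=> j' /negbTE nj; rewrite mxE (inj_eq val_inj) nj mulr0.
Qed.

Definition colv n m (h : 'M[R]_(n, m)) k j := PhiM h *m vvec R q mu m k j.

Lemma colvE n m (h : 'M[R]_(n, m)) k j (hk : (k < q)%N) (hj : (j < mu k * m)%N)
  (I : 'I_(muT * n)) :
  colv h k j I 0 = a (blk (I %% muT)) (pos (I %% muT)) * mxe h (I %/ muT) (j %/ mu k)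
     * b k (j %% mu k).
Proof.
have hv := vidx_lt Hmu hk hj.
rewrite /colv /vvec (_ : vidx k j = Ordinal hv) // mul_stdv !mxE mulr1 /Defs.PhiE /=.
by rewrite vidx_div // vidx_blk // vidx_pos.
Qed.

Lemma inL_l k x : (k < q)%N -> inL e k k x -> e k 0 * x = x.
Proof. by move=> hk <-; rewrite !mulrA eid ?Hmu. Qed.

Lemma inL_r k x : (k < q)%N -> inL e k k x -> x * e k 0 = x.
Proof. by move=> hk <-; rewrite -!mulrA eid ?Hmu. Qed.

Lemma entryM P x k r : (P < muT)%N -> (k < q)%N -> (r < mu k)%N ->
  if blk P == k then inL e k k (a (blk P) (pos P) * x * b k r)
  else a (blk P) (pos P) * x * b k r = 0.
Proof.
move=> hP hk hr; have [h1 h2 h3] := blkP hP.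
case: eqP => [E|/eqP NE].
- rewrite /inL E; rewrite E in h2.
  by rewrite !mulrA ea // -!mulrA be.
- move: (HL (a (blk P) (pos P) * x * b k r) h1 hk NE).
  by rewrite !mulrA ea // -!mulrA be // !mulrA.
Qed.

Lemma colv_inM n m (h : 'M[R]_(n, m)) k j : (k < q)%N -> (j < mu k * m)%N ->
  inMk e k (colv h k j).
Proof.
move=> hk hj; rewrite /inMk => I; rewrite (inblk (modlt I) hk) colvE //.
by apply: entryM; [exact: modlt | exact: hk | rewrite ltn_mod Hmu].
Qed.

Section Span.
Variable k : nat.
Hypothesis hk : (k < q)%N.
Local Notation D := (inL e k k).
Local Notation ek := (e k 0).

Lemma D0 : D 0. Proof. by rewrite /inL mulr0 mul0r. Qed.
Lemma DD x y : D x -> D y -> D (x + y).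
Proof. by rewrite /inL => hx hy; rewrite mulrDr mulrDl hx hy. Qed.
Lemma DN x : D x -> D (- x).
Proof. by rewrite /inL => hx; rewrite mulrN mulNr hx. Qed.
Lemma DM x y : D x -> D y -> D (x * y).
Proof. by move=> hx hy; rewrite /inL mulrA inL_l // -mulrA inL_r. Qed.
Lemma De : D ek.
Proof. by rewrite /inL !eid ?Hmu. Qed.

Lemma rscal0r M (c : 'cV[R]_M) : rscal c 0 = 0.
Proof. by apply/matrixP => I z; rewrite !mxE mulr0. Qed.
Lemma rscal0l M d : rscal (0 : 'cV[R]_M) d = 0.
Proof. by apply/matrixP => I z; rewrite !mxE mul0r. Qed.
Lemma rscalDl M (c1 c2 : 'cV[R]_M) d : rscal (c1 + c2) d = rscal c1 d + rscal c2 d.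
Proof. by apply/matrixP => I z; rewrite !mxE mulrDl. Qed.
Lemma rscalDr M (c : 'cV[R]_M) d1 d2 : rscal c (d1 + d2) = rscal c d1 + rscal c d2.
Proof. by apply/matrixP => I z; rewrite !mxE mulrDr. Qed.
Lemma rscalNl M (c : 'cV[R]_M) d : rscal (- c) d = - rscal c d.
Proof. by apply/matrixP => I z; rewrite !mxE mulNr. Qed.
Lemma rscalNr M (c : 'cV[R]_M) d : rscal c (- d) = - rscal c d.
Proof. by apply/matrixP => I z; rewrite !mxE mulrN. Qed.
Lemma rscalA M (c : 'cV[R]_M) x y : rscal (rscal c x) y = rscal c (x * y).
Proof. by apply/matrixP => I z; rewrite !mxE mulrA. Qed.
Lemma rscal_sum M (I : finType) (P : pred I) (F : I -> 'cV[R]_M) d :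
  rscal (\sum_(i | P i) F i) d = \sum_(i | P i) rscal (F i) d.
Proof.
elim/big_rec2: _ => [|i y1 y2 _ <-]; [exact: rscal0l | exact: rscalDl].
Qed.
Lemma mul_rscal N M (F : 'M[R]_(N, M)) c d : F *m rscal c d = rscal (F *m c) d.
Proof.
apply/matrixP => I z; rewrite !mxE mulr_suml; apply: eq_bigr => j _.
by rewrite !mxE mulrA.
Qed.

Definition spanv N M (c : 'I_N -> 'cV[R]_M) (A : pred 'I_N) (y : 'cV[R]_M) :=
  exists d : 'I_N -> R, (forall j, D (d j)) /\ y = \sum_(j | A j) rscal (c j) (d j).

Definition rfix M (y : 'cV[R]_M) := rscal y ek = y.

Lemma inM_rfix N (y : 'cV[R]_(muT * N)) : inMk e k y -> rfix y.
Proof.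
move=> hy; apply/matrixP => I z; rewrite !mxE (ord1 z).
have := hy I; case: ifP => _; first by move=> H; rewrite inL_r.
by move=> ->; rewrite mul0r.
Qed.

Section SpanF.
Variables (N M : nat) (c : 'I_N -> 'cV[R]_M).

Lemma span0 A : spanv c A 0.
Proof. by exists (fun _ => 0); split => [j|]; [exact: D0 | rewrite big1 // => j _; rewrite rscal0r]. Qed.

Lemma spanD A y1 y2 : spanv c A y1 -> spanv c A y2 -> spanv c A (y1 + y2).
Proof.
move=> [d1 [h1 ->]] [d2 [h2 ->]]; exists (fun j => d1 j + d2 j); split.
  by move=> j; apply: DD.
by rewrite -big_split /=; apply: eq_bigr => j _; rewrite rscalDr.
Qed.

Lemma spanZ A y x : D x -> spanv c A y -> spanv c A (rscal y x).
Proof.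
move=> hx [d [h ->]]; exists (fun j => d j * x); split.
  by move=> j; apply: DM.
by rewrite rscal_sum; apply: eq_bigr => j _; rewrite rscalA.
Qed.

Lemma spanN A y : spanv c A y -> spanv c A (- y).
Proof.
move=> [d [h ->]]; exists (fun j => - d j); split.
  by move=> j; apply: DN.
by rewrite -sumrN; apply: eq_bigr => j _; rewrite rscalNr.
Qed.

Lemma span_sum A (I : finType) (P : pred I) (F : I -> 'cV[R]_M) :
  (forall i, P i -> spanv c A (F i)) -> spanv c A (\sum_(i | P i) F i).
Proof.
move=> H; apply: (big_ind (spanv c A)); [exact: span0 | exact: spanD | exact: H].
Qed.

Lemma span_gen (A : pred 'I_N) j0 : A j0 -> rfix (c j0) -> spanv c A (c j0).
Proof.
move=> hA hr; exists (fun j => if j == j0 then ek else 0); split.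
  by move=> j; case: eqP => _; [exact: De | exact: D0].
rewrite (bigD1 j0) //= eqxx hr big1 ?addr0 // => j /andP [_ /negbTE ->].
by rewrite rscal0r.
Qed.

Lemma span_rfix A y : spanv c A y -> rfix y.
Proof.
move=> [d [h ->]]; rewrite /rfix rscal_sum; apply: eq_bigr => j _.
by rewrite rscalA inL_r.
Qed.

End SpanF.

Lemma span_trans N N' M (c : 'I_N -> 'cV[R]_M) (c' : 'I_N' -> 'cV[R]_M) A B y :
  spanv c A y -> (forall j, A j -> spanv c' B (c j)) -> spanv c' B y.
Proof.
move=> [d [h ->]] H; apply: span_sum => j hj; apply: spanZ => //; exact: H.
Qed.

Lemma span_mono N M (c : 'I_N -> 'cV[R]_M) (A B : pred 'I_N) y :
  (forall j, A j -> B j) -> (forall j, rfix (c j)) -> spanv c A y -> spanv c B y.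
Proof.
by move=> hAB hr hy; apply: span_trans hy _ => j hj; apply: span_gen; [apply: hAB|].
Qed.

Lemma span_lin N M M' (F : 'M[R]_(M', M)) (c : 'I_N -> 'cV[R]_M) A y :
  spanv c A y -> spanv (fun j => F *m c j) A (F *m y).
Proof.
move=> [d [h ->]]; exists d; split => //.
by rewrite mulmx_sumr; apply: eq_bigr => j _; rewrite mul_rscal.
Qed.


Section Greedy.
Variables (N n0 : nat) (c : 'I_N -> 'cV[R]_(muT * n0)).
Hypothesis HcM : forall j, inMk e k (c j).
Hypothesis Hsp : forall y, inMk e k y -> spanv c predT y.

Definition ltp (j : 'I_N) := fun j' : 'I_N => (j' < j)%N.
Definition G := [set j : 'I_N | ~~ pb (spanv c (ltp j) (c j))].

Lemma rfc j : rfix (c j). Proof. exact: inM_rfix. Qed.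

Lemma notG j : j \notin G -> spanv c (ltp j) (c j).
Proof. by rewrite inE negbK => /pbP. Qed.

Lemma inG j : j \in G -> ~ spanv c (ltp j) (c j).
Proof. by rewrite inE => /negP H1 H2; apply: H1; apply/pbP. Qed.

Lemma greedy_span (j : 'I_N) : spanv c (fun j' => (j' \in G) && (j' <= j)%N) (c j).
Proof.
suff H : forall t (j : 'I_N), (j < t)%N -> spanv c (fun j' => (j' \in G) && (j' <= j)%N) (c j).
  exact: (H j.+1).
elim=> [//|t IH] {}j hj.
case hG : (j \in G); first by apply: span_gen; [rewrite /= hG leqnn | exact: rfc].
apply: span_trans (notG (negbT hG)) _ => j' hj'.
apply: (span_mono _ rfc (IH j' (leq_trans hj' hj))) => j'' /andP [-> h] /=.
exact: leq_trans h (ltnW hj').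
Qed.

Lemma prefix_span j y : spanv c (ltp j) y -> spanv c (fun j' => (j' \in G) && (j' < j)%N) y.
Proof.
move=> hy; apply: span_trans hy _ => j' hj'.
apply: (span_mono _ rfc (greedy_span j')) => j'' /andP [-> h] /=.
exact: leq_ltn_trans h hj'.
Qed.

Lemma G_spans y : inMk e k y -> spanv c (fun j => j \in G) y.
Proof.
move=> /Hsp hy; apply: span_trans hy _ => j _.
by apply: (span_mono _ rfc (greedy_span j)) => j' /andP [].
Qed.

Lemma G_indep (d : 'I_N -> R) : (forall j, D (d j)) ->
  \sum_(j in G) rscal (c j) (d j) = 0 -> forall j, j \in G -> d j = 0.
Proof.
move=> hd hs j0 hj0; apply/eqP; apply/negP => /negP nz0.
pose S' := [pred j | (j \in G) && (d j != 0)].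
have hS0 : S' j0 by rewrite /S' /= hj0 nz0.
case: (arg_maxnP (fun j : 'I_N => val j) hS0) => jm /andP [hjm nzm] hmax.
apply: (inG hjm).
have [_ inv] := Hdiv hk; have [y [hy h1 h2]] := inv _ (hd jm) nzm.
have E : c jm = rscal (rscal (c jm) (d jm)) y by rewrite rscalA h1 rfc.
move: hs; rewrite (bigD1 jm) //= => /eqP; rewrite addr_eq0 => /eqP E2.
rewrite E E2 rscalNl; apply: spanN; apply: spanZ => //; apply: span_sum => j /andP [hj nj].
case: (eqVneq (d j) 0) => [->|nzj]; first by rewrite rscal0r; apply: span0.
apply: spanZ => //; apply: span_gen; last exact: rfc.
have := hmax j; rewrite /S' /= hj nzj => /(_ isT) hle.
by rewrite /ltp ltn_neqAle hle andbT (inj_eq val_inj).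
Qed.

Lemma G_inj : {in G &, injective c}.
Proof.
move=> j1 j2 h1 h2 E; case: (ltngtP j1 j2) => [lt|lt|eq]; last exact: val_inj.
- by exfalso; apply: (inG h2); rewrite -E; apply: span_gen; [exact: lt | exact: rfc].
- by exfalso; apply: (inG h1); rewrite E; apply: span_gen; [exact: lt | exact: rfc].
Qed.

Lemma G_lexmin (B : {set 'I_N}) :
  (forall y, inMk e k y -> exists d : 'I_N -> R,
      (forall j, D (d j)) /\ y = \sum_(j in B) rscal (c j) (d j)) ->
  (forall d : 'I_N -> R, (forall j, D (d j)) ->
      \sum_(j in B) rscal (c j) (d j) = 0 -> forall j, j \in B -> d j = 0) ->
  lexle (sortedS G) (sortedS B).
Proof.
move=> HBsp HBind.
case: (eqVneq G B) => [->|neq]; first exact: lexle_refl.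
have [j0 hj0] : exists j0, (j0 \in G) != (j0 \in B).
  apply/existsP; apply: contraNT neq => /existsPn H; apply/eqP/setP => j.
  by have := H j; rewrite negbK => /eqP.
case: (@arg_minnP _ j0 (fun j => (j \in G) != (j \in B)) (fun j : 'I_N => val j) hj0) => x hx hmin.
have hlow : forall y : nat, (y < x)%N -> (y \in sortedS G) = (y \in sortedS B).
  move=> y hy; case: (ltnP y N) => hyN.
  - rewrite -[y]/(val (Ordinal hyN)) !mem_sortedS.
    apply: contraTeq hy => H; rewrite -leqNgt; exact: hmin _ H.
  - have F1 : forall S : {set 'I_N}, (y \in sortedS S) = false.
      by move=> S; apply/negP => /sortedS_lt; rewrite ltnNge hyN.
    by rewrite !F1.
case hxG : (x \in G).
- have hxB : (x \in B) = false by move: hx; rewrite hxG; case: (x \in B).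
  apply: (lex_lemma (x := x)); [exact: sortedS_sorted | exact: sortedS_sorted | exact: hlow
    | by rewrite mem_sortedS | by rewrite mem_sortedS hxB | ].
  apply/negPn/negP => /hasPn H; apply: (inG hxG).
  have /HBsp hs : inMk e k (c x) by [].
  apply: (span_mono _ rfc hs) => j hj; rewrite /ltp ltn_neqAle.
  have hjs : val j \in sortedS B by rewrite mem_sortedS.
  have := H _ hjs.
  rewrite -leqNgt => ->; rewrite andbT; apply: contraTneq hj => /val_inj ->.
  by rewrite hxB.
- have hxB : x \in B by move: hx; rewrite hxG; case: (x \in B).
  have hs := prefix_span (notG (negbT hxG)).
  have : spanv c (fun j => (j \in B) && (j < x)%N) (c x).
    apply: (span_mono _ rfc hs) => j /andP [hjG hjx]; rewrite hjx andbT.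
    have : (j \in G) == (j \in B).
      by apply: contraTT hjx => /hmin; rewrite -leqNgt.
    by move/eqP <-.
  move=> [d [hd Ed]].
  pose d' (j : 'I_N) := if (j < x)%N then d j else if j == x then - ek else 0.
  have hd' : forall j, D (d' j).
    by move=> j; rewrite /d'; case: ifP => _; [|case: ifP => _; [apply: DN; exact: De|exact: D0]].
  have S0 : \sum_(j in B) rscal (c j) (d' j) = 0.
    rewrite (bigD1 x) //=; have -> : d' x = - ek by rewrite /d' ltnn eqxx.
    rewrite rscalNr rfc.
    have -> : \sum_(j in B | j != x) rscal (c j) (d' j) = c x.
      rewrite Ed big_mkcond [RHS]big_mkcond /=; apply: eq_bigr => j _.
      rewrite /d'; case: (j \in B) => //=; case: ltnP => hjx /=.
      + by rewrite (_ : j != x) // neq_ltn hjx.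
      + by case: eqP => _ //=; rewrite rscal0r.
    by rewrite addNr.
  have := HBind d' hd' S0 x hxB; rewrite /d' ltnn eqxx => /eqP.
  by rewrite oppr_eq0 (negbTE (Hdiv hk).1).
Qed.

End Greedy.
End Span.

Section Main.
Variable k : nat.
Hypothesis hk : (k < q)%N.
Local Notation D := (inL e k k).
Local Notation ek := (e k 0).

Lemma decompv N (z : 'cV[R]_(muT * N)) :
  (forall I : 'I_(muT * N), blk (I %% muT) != k -> z I 0 = 0) ->
  z = \sum_(j < mu k * N) rscal (stdv (muT * N) (vidx k j) 1) (mxe z (vidx k j) 0).
Proof.
move=> hz; apply/matrixP => I o; rewrite (ord1 o) summxE.
under eq_bigr do rewrite !mxE.
case: (eqVneq (blk (I %% muT)) k) => hb.
- have [j0 hj0 Ej0] := vidx_surj Hmu hk (ltn_ord I) hb.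
  rewrite (bigD1 (Ordinal hj0)) //= Ej0 eqxx mul1r big1 ?addr0.
    by rewrite (mxe_ord _ (ltn_ord I) (ltn0Sn 0)); congr (z _ _); apply: val_inj.
  move=> j nj; case: eqP => E; last by rewrite mul0r.
  exfalso; move/negP: nj; apply; apply/eqP/val_inj => /=.
  by apply: (vidx_inj Hmu hk); rewrite -E Ej0.
- rewrite hz // big1 // => j _; case: eqP => E; last by rewrite mul0r.
  by move: hb; rewrite E vidx_blk // eqxx.
Qed.

Lemma surj_span n m (h : 'M[R]_(n, m)) : surj_mx h ->
  forall y : 'cV[R]_(muT * n), inMk e k y ->
  spanv k (fun j : 'I_(mu k * m) => colv h k j) predT y.
Proof.
move=> hs y hy.
pose Y : 'cV[R]_n := \col_r (\sum_(p < mu k) b k p * mxe y (r * muT + off k + p)%N 0).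
have hJ0 : (off k < muT * 1)%N by rewrite muln1; have := offq mu hk; have := Hmu hk; lia.
pose J0 := Ordinal hJ0.
have hJ1 : (off k < muT)%N by rewrite -[muT]muln1.
have bo : blk (off k) = k by rewrite -[off k]addn0 blk_off ?Hmu.
have po : pos (off k) = 0%N by rewrite -[off k]addn0 pos_off ?Hmu.
have EY : forall I : 'I_(muT * n), PhiM Y I J0 = y I 0.
  move=> I; have hT := muT_pos I.
  rewrite mxE /Defs.PhiE /=.
  rewrite (divn_small hJ1) (modn_small hJ1).
  rewrite (mxe_ord _ (divlt I) (ltn0Sn 0)) mxE.
  rewrite bo po.
  rewrite (Ha0 hk).2 mulr_sumr mulr_suml.
  have [h1 h2 h3] := blkP (modlt I).
  have HP : forall p : 'I_(mu k), a (blk (I %% muT)) (pos (I %% muT)) *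
      (b k p * mxe y ((I %/ muT) * muT + off k + p)%N 0) * ek =
      if (blk (I %% muT) == k) && (pos (I %% muT) == p) then y I 0 else 0.
    move=> p; rewrite mulrA ab_orth ?ltn_ord //.
    case: andP => [[/eqP E1 /eqP E2]|_]; last by rewrite !mul0r.
    have := hy I; rewrite (inblk (modlt I) hk) E1 eqxx /inL => H.
    have EI : ((I %/ muT) * muT + off k + p)%N = I.
      by rewrite -addnA -E2 -E1 h3 -divn_eq.
    have hlt : ((I %/ muT) * muT + off k + p < muT * n)%N by rewrite EI.
    rewrite (mxe_ord _ hlt (ltn0Sn 0)) (_ : Ordinal hlt = I) //.
    by apply: val_inj.
  rewrite (eq_bigr _ (fun p _ => HP p)).
  case: (eqVneq (blk (I %% muT)) k) => E1 /=.
  - rewrite E1 in h2; rewrite (bigD1 (Ordinal h2)) //= eqxx big1 ?addr0 // => p np.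
    by case: eqP => // E; move/eqP: np; case; apply: val_inj.
  - rewrite big1 //; have := hy I; rewrite (inblk (modlt I) hk) (negbTE E1).
    by move=> ->.
have [x hx] := hs Y.
pose z : 'cV[R]_(muT * m) := \col_K (PhiM x K J0).
have Ey : y = PhiM h *m z.
  apply/matrixP => I o; rewrite (ord1 o) -EY -hx PhiM_mul !mxE.
  by apply: eq_bigr => K _; rewrite /z [X in _ = _ * X]mxE.
have hz : forall K : 'I_(muT * m), blk (K %% muT) != k -> z K 0 = 0.
  move=> K nK; rewrite !mxE /Defs.PhiE /= (divn_small hJ1) (modn_small hJ1).
  rewrite bo po.
  have := entryM (mxe x (K %/ muT) 0) (modlt K) hk (Hmu hk).
  by rewrite (negbTE nK).
exists (fun j : 'I_(mu k * m) => mxe z (vidx k j) 0); split.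
  move=> j; have hv := vidx_lt Hmu hk (ltn_ord j).
  rewrite (mxe_ord _ hv (ltn0Sn 0)) !mxE /Defs.PhiE /= (divn_small hJ1) (modn_small hJ1).
  rewrite bo po.
  have := entryM (mxe x (vidx k j %/ muT) 0) (modlt (Ordinal hv)) hk (Hmu hk).
  by rewrite /= vidx_blk // eqxx.
rewrite {1}Ey {1}(decompv hz) mulmx_sumr; apply: eq_bigr => j _.
by rewrite mul_rscal.
Qed.

End Main.

Section Main2.
Variable k : nat.
Hypothesis hk : (k < q)%N.
Local Notation D := (inL e k k).
Local Notation ek := (e k 0).

Definition cc n m (h : 'M[R]_(n, m)) := fun j : 'I_(mu k * m) => colv h k j.
Definition Gs n m (h : 'M[R]_(n, m)) := G k (cc h).

Lemma ccM n m (h : 'M[R]_(n, m)) j : inMk e k (cc h j).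
Proof. exact: colv_inM. Qed.

Lemma basis_G n m (h : 'M[R]_(n, m)) : surj_mx h -> is_basis_k q e a b h (Gs h).
Proof.
move=> hs; split.
- by move=> j _; apply: ccM.
- exact: (G_inj hk (ccM h)).
- by move=> y hy; apply: (G_spans hk (ccM h) (surj_span hk hs)).
- by move=> d hd; apply: (G_indep hk (ccM h)).
Qed.

Lemma frakS_ex n m (h : 'M[R]_(n, m)) : surj_mx h -> is_frakS q e a b h (Gs h).
Proof.
move=> hs; split; first exact: basis_G.
by move=> S' [_ _ h3 h4]; apply: (G_lexmin hk (ccM h)).
Qed.

Lemma frakS_G n m (h : 'M[R]_(n, m)) (S : {set 'I_(mu k * m)}) : surj_mx h -> is_frakS q e a b h S ->
  sortedS S = sortedS (Gs h).
Proof.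
move=> hs [[h1 h2 h3 h4] hmin]; apply: lexle_anti; first exact: hmin _ (basis_G hs).
exact: (G_lexmin hk (ccM h)).
Qed.

Lemma wvec_inM N s : (s < mu k * N)%N -> inMk e k (wvec q mu e N k s).
Proof.
move=> hs; rewrite /inMk => I; rewrite (inblk (modlt I) hk) !mxE.
case: (eqVneq (val I) (vidx k s)) => [E|_]; last by case: ifP => _ //; exact: D0.
by rewrite E vidx_blk // eqxx; exact: De.
Qed.

Lemma wdecomp N (y : 'cV[R]_(muT * N)) : inMk e k y ->
  spanv k (fun s : 'I_(mu k * N) => wvec q mu e N k s) predT y.
Proof.
move=> hy.
have hz : forall I : 'I_(muT * N), blk (I %% muT) != k -> y I 0 = 0.
  by move=> I nI; have := hy I; rewrite (inblk (modlt I) hk) (negbTE nI).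
exists (fun s : 'I_(mu k * N) => mxe y (vidx k s) 0); split.
  move=> s; have hv := vidx_lt Hmu hk (ltn_ord s).
  have := hy (Ordinal hv); rewrite (mxe_ord _ hv (ltn0Sn 0)) (inblk (modlt _) hk) /=.
  by rewrite vidx_blk // eqxx.
rewrite {1}(decompv hk hz); apply: eq_bigr => s _.
have hv := vidx_lt Hmu hk (ltn_ord s).
have := hy (Ordinal hv); rewrite (mxe_ord _ hv (ltn0Sn 0)) (inblk (modlt _) hk) /=.
rewrite vidx_blk // eqxx => hD.
apply/matrixP => I o; rewrite !mxE; case: ifP => _; last by rewrite !mul0r.
by rewrite mul1r inL_l.
Qed.

Lemma Phiw n m (h : 'M[R]_(n, m)) s : (s < mu k * m)%N ->
  PhiM h *m wvec q mu e m k s = colv h k s.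
Proof.
move=> hs; have hv := vidx_lt Hmu hk hs.
have r := inM_rfix hk (colv_inM h hk hs).
rewrite -r /colv /wvec /vvec (_ : vidx k s = Ordinal hv) // !mul_stdv.
by apply/matrixP => I o; rewrite !mxE mulr1.
Qed.

Lemma colv_comp n p m (h2 : 'M[R]_(n, p)) (h1 : 'M[R]_(p, m)) j :
  colv (h2 *m h1) k j = PhiM h2 *m colv h1 k j.
Proof. by rewrite /colv PhiM_mul mulmxA. Qed.

Lemma span_ext N M (c c' : 'I_N -> 'cV[R]_M) A y :
  (forall j, c j = c' j) -> spanv k c A y -> spanv k c' A y.
Proof.
move=> E [d [hd ->]]; exists d; split => //.
by apply: eq_bigr => j _; rewrite E.
Qed.


Lemma size_g n m (h : 'M[R]_(n, m)) : surj_mx h ->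
  (forall i, (i < mu k * n)%N ->
     colv h k (nth 0%N (sortedS (Gs h)) i) = wvec q mu e n k i) ->
  size (sortedS (Gs h)) = (mu k * n)%N.
Proof.
move=> hs hw; set g := sortedS (Gs h).
have hsort : sorted ltn g := sortedS_sorted (Gs h).
apply/eqP; rewrite eqn_leq; apply/andP; split.
- rewrite leqNgt; apply/negP => hlt.
  have hj : nth 0%N g (mu k * n) \in g := mem_nth 0%N hlt.
  have hjm := sortedS_lt hj.
  pose J := Ordinal hjm.
  have hJ : J \in Gs h by rewrite -mem_sortedS.
  apply: (inG hJ).
  apply: (span_trans hk (wdecomp (ccM h J))) => s _.
  have hsg : (s < size g)%N by apply: ltn_trans (ltn_ord s) hlt.
  have hs' := sortedS_lt (mem_nth 0%N hsg).
  have -> : wvec q mu e n k s = cc h (Ordinal hs') by rewrite -hw.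
  apply: (span_gen hk); last exact: (inM_rfix hk (ccM h _)).
  rewrite /ltp /=; apply: (sorted_ltn_nth ltn_trans) => //.
- rewrite leqNgt; apply/negP => hlt.
  have [d [hd Ew]] := G_spans hk (ccM h) (surj_span hk hs) (wvec_inM hlt).
  have hv := vidx_lt Hmu hk hlt.
  have := congr1 (fun M : 'cV[R]_(muT * n) => M (Ordinal hv) 0) Ew; rewrite /= !mxE eqxx summxE big1.
    by move=> E; move: (Hdiv hk).1; rewrite E eqxx.
  move=> j hjG; rewrite mxE.
  have hjg : val j \in g by rewrite mem_sortedS.
  have ht : (index (val j) g < size g)%N by rewrite index_mem.
  have := hw _ (ltn_trans ht hlt); rewrite nth_index // => Ej.
  rewrite /cc Ej !mxE /=; case: eqP => [E|_]; last by rewrite mul0r.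
  exfalso; have := vidx_inj Hmu hk E => E2.
  by move: ht; rewrite -E2 ltnn.
Qed.


Section Comp.
Variables (n m l : nat) (h1 : 'M[R]_(n, m)) (h2 : 'M[R]_(l, n)).
Hypotheses (hs1 : surj_mx h1) (hs2 : surj_mx h2).
Hypothesis hw1 : forall i, (i < mu k * n)%N ->
     colv h1 k (nth 0%N (sortedS (Gs h1)) i) = wvec q mu e n k i.
Hypothesis hw2 : forall i, (i < mu k * l)%N ->
     colv h2 k (nth 0%N (sortedS (Gs h2)) i) = wvec q mu e l k i.
Local Notation g1 := (sortedS (Gs h1)).
Local Notation g2 := (sortedS (Gs h2)).

Lemma size_g1 : size g1 = (mu k * n)%N. Proof. exact: size_g. Qed.
Lemma size_g2 : size g2 = (mu k * l)%N. Proof. exact: size_g. Qed.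

Lemma hsort1 : sorted ltn g1. Proof. exact: sortedS_sorted. Qed.

Lemma c1w (s : nat) : (s < mu k * n)%N ->
  colv (h2 *m h1) k (nth 0%N g1 s) = colv h2 k s.
Proof. by move=> hs; rewrite colv_comp hw1 // Phiw. Qed.

Lemma memG (j : 'I_(mu k * m)) :
  (j \in Gs (h2 *m h1)) = (j \in Gs h1) && (index (val j) g1 \in g2).
Proof.
case hj1 : (j \in Gs h1) => /=.
- have hjg : val j \in g1 by rewrite mem_sortedS.
  have ht : (index (val j) g1 < mu k * n)%N by rewrite -size_g1 index_mem.
  pose T := Ordinal ht.
  have Ecj : cc (h2 *m h1) j = cc h2 T.
    by rewrite /cc -(c1w ht) nth_index.
  rewrite -[index _ _]/(val T) mem_sortedS !inE; congr negb.
  apply/pbP/pbP => H.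
  + rewrite -Ecj in H *.
    apply: (span_trans hk H) => j' hj'.
    rewrite /cc colv_comp.
    have := greedy_span hk (ccM h1) j' => H1.
    have H2 : spanv k (fun s : 'I_(mu k * n) => wvec q mu e n k s) (ltp T) (cc h1 j').
      apply: (span_trans hk H1) => j'' /andP [hj'' hle].
      have hjg'' : val j'' \in g1 by rewrite mem_sortedS.
      have ht'' : (index (val j'') g1 < mu k * n)%N by rewrite -size_g1 index_mem.
      have -> : cc h1 j'' = wvec q mu e n k (Ordinal ht'').
        by rewrite /cc -hw1 // nth_index.
      apply: (span_gen hk); last exact: (inM_rfix hk (wvec_inM _)).
      rewrite /ltp /=.
      case: (ltngtP (index (val j'') g1) (index (val j) g1)) => // H3; exfalso.
      * have := sorted_ltn_nth ltn_trans 0%N hsort1; move/(_ (index (val j) g1) (index (val j'') g1)).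
        rewrite !inE size_g1 => /(_ ht ht'' H3); rewrite !nth_index //.
        by move=> H4; have := leq_trans hle (ltnW hj'); rewrite leqNgt H4.
      * have := congr1 (nth 0%N g1) H3; rewrite !nth_index // => /val_inj E.
        by move: hle hj'; rewrite E => H5 H6; have := leq_ltn_trans H5 H6; rewrite ltnn.
    have := span_lin (PhiM h2) H2.
    apply: span_ext => s; exact: Phiw.
  + rewrite Ecj; apply: (span_trans hk H) => s hs.
    have hsg : (s < size g1)%N by rewrite size_g1.
    have hs' := sortedS_lt (mem_nth 0%N hsg).
    have -> : cc h2 s = cc (h2 *m h1) (Ordinal hs') by rewrite /cc /= c1w.
    apply: (span_gen hk); last exact: (inM_rfix hk (ccM _ _)).
    rewrite /ltp /= -[val j](nth_index 0%N hjg).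
    have hi1 : (val s) \in [pred n | (n < size g1)%N] by rewrite inE.
    have hi2 : index (val j) g1 \in [pred n | (n < size g1)%N] by rewrite inE index_mem.
    by have := sorted_ltn_nth ltn_trans 0%N hsort1 _ _ hi1 hi2 hs.
- apply/negbTE; rewrite /Gs /G inE negbK; apply/pbP.
  have hj1' : j \notin Gs h1 by rewrite hj1.
  have := span_lin (PhiM h2) (notG hj1').
  have E : cc (h2 *m h1) j = PhiM h2 *m cc h1 j by rewrite /cc colv_comp.
  rewrite E; apply: span_ext => j'; by rewrite /cc colv_comp.
Qed.

Lemma Gcomp : sortedS (Gs (h2 *m h1)) = map (nth 0%N g1) g2.
Proof.
apply: (irr_sorted_eq ltn_trans ltnn); first exact: sortedS_sorted.
- rewrite sorted_map; apply: (@sub_in_sorted _ (fun t => (t < size g1)%N)); last first.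
  + exact: sortedS_sorted.
  + by apply/allP => t /sortedS_lt; rewrite size_g1.
  + by move=> x y hx hy hxy; apply: (sorted_ltn_nth ltn_trans 0%N hsort1).
- move=> x; apply/idP/idP.
  + move=> hx; have hxm := sortedS_lt hx.
    rewrite -[x]/(val (Ordinal hxm)) mem_sortedS memG in hx.
    case/andP: hx => hJ1 hti; apply/mapP; exists (index x g1) => //.
    by rewrite nth_index // -[x]/(val (Ordinal hxm)) mem_sortedS.
  + case/mapP => t ht ->.
    have htg : (t < size g1)%N by rewrite size_g1; exact: sortedS_lt ht.
    have hx := mem_nth 0%N htg; have hxm := sortedS_lt hx.
    rewrite -[nth _ _ _]/(val (Ordinal hxm)) mem_sortedS memG /=.
    rewrite index_uniq ?ht ?andbT //; last exact: (@sorted_uniq _ ltn ltn_trans ltnn _ hsort1).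
    by rewrite -mem_sortedS.
Qed.

End Comp.
End Main2.

Lemma main_core n m l (h1 : 'M[R]_(n, m)) (h2 : 'M[R]_(l, n)) :
  column_adapted q mu e a b h1 ->
  column_adapted q mu e a b h2 ->
  column_adapted q mu e a b (h2 *m h1).
Proof.
move=> [hs1 ca1] [hs2 ca2].
have hs : surj_mx (h2 *m h1).
  move=> y; have [x2 <-] := hs2 y; have [x1 <-] := hs1 x2.
  by exists x1; rewrite mulmxA.
split => // k hk S hS i hi.
have hw1 := ca1 k hk _ (frakS_ex hk hs1).
have hw2 := ca2 k hk _ (frakS_ex hk hs2).
change (colv (h2 *m h1) k (nth 0%N (sortedS S) i) = wvec q mu e l k i).
rewrite (frakS_G hk hs hS) (Gcomp hk h2 hs1 hw1) (nth_map 0%N); last first.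
  by rewrite (size_g2 hk hs2 hw2).
have hsz := size_g2 hk hs2 hw2.
have ht : (nth 0%N (sortedS (Gs k h2)) i < mu k * n)%N.
  by apply: sortedS_lt; apply: mem_nth; rewrite hsz.
by rewrite (c1w hk h2 hw1 ht); exact: hw2.
Qed.

End Ring.

Unset Implicit Arguments.

Theorem lemma4p2 (R : nzRingType) (q : nat) (mu : nat -> nat)
    (e a b : nat -> nat -> R) (m n l : nat)
    (h1 : 'M[R]_(n, m)) (h2 : 'M[R]_(l, n)) :
  AW_data q mu e a b ->
  column_adapted q mu e a b h1 ->
  column_adapted q mu e a b h2 ->
  column_adapted q mu e a b (h2 *m h1).
Proof.
move=> [[Hmu Horth] Hsum Hab Ha0 [HL Hdiv]].
exact: (main_core Hmu Horth Hsum Hab Ha0 HL Hdiv).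
Qed.
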